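(* Fix a monomial order on $S$. Let $J,E,E'$ be ideals of $S$ such that $(J,E)$ and $(J,E')$ are G-nice pairs. The following are equivalent: (a) $J\cap E+J\cap E'=J\cap(E+E')$ and $(J,E+E')$ is a G-nice pair; (b) $\mathrm{in}(J\cap E+J\cap E')=\mathrm{in}(J)\cap\mathrm{in}(E+E')$.
   Context: $K$ is a field and $S=K[x_1,\ldots,x_n]$ with a fixed monomial order. For $0\neq f\in S$, $\mathrm{in}(f)$ denotes its leading monomial; for an ideal $I$, $\mathrm{in}(I)$ is the ideal generated by the leading monomials of the nonzero elements of $I$. A pair $(J,E)$ of ideals of $S$ is called Gröbner nice (G-nice) if $\mathrm{in}(J+E)=\mathrm{in}(J)+\mathrm{in}(E)$ (equivalently, the union of a Gröbner basis of $J$ and a Gröbner basis of $E$ is a Gröbner basis of $J+E$; equivalently, $\mathrm{in}(J\cap E)=\mathrm{in}(J)\cap\mathrm{in}(E)$). *)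

(* Defs.v *)
From mathcomp Require Import all_boot all_order all_algebra.
From mathcomp Require Import mpoly.
Set Implicit Arguments. Unset Strict Implicit. Unset Printing Implicit Defensive.
Import GRing.Theory.
Local Open Scope ring_scope.

(* A monomial order on the monomials 'X_{1..n} of S = K[x_1..x_n]:
   a total order, compatible with multiplication of monomials (addition of
   exponent vectors), with 1 (the zero exponent) as least element
   (equivalently, a multiplicative total well-order). *)
Record monomial_order (n : nat) := MonomialOrder {
  mle : rel 'X_{1..n};
  mle_refl : reflexive mle;
  mle_anti : antisymmetric mle;
  mle_trans : transitive mle;
  mle_total : total mle;
  mle_addr : forall m1 m2 m : 'X_{1..n}, mle m1 m2 -> mle (m1 + m)%MM (m2 + m)%MM;
  mle_0 : forall m : 'X_{1..n}, mle 0%MM m }.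

Section Ideals.
Variables (K : fieldType) (n : nat).
Local Notation S := {mpoly K[n]}.

Definition is_ideal (I : S -> Prop) : Prop :=
  [/\ I 0, (forall f g, I f -> I g -> I (f + g)) & (forall h f, I f -> I (h * f))].

Definition ideal_sum (I J : S -> Prop) : S -> Prop :=
  fun f => exists g h, [/\ I g, J h & f = g + h].

Definition ideal_cap (I J : S -> Prop) : S -> Prop := fun f => I f /\ J f.

Definition ideal_eq (I J : S -> Prop) : Prop := forall f, I f <-> J f.

Definition ideal_gen (G : S -> Prop) : S -> Prop :=
  fun f => exists (k : nat) (h g : 'I_k -> S),
    (forall i, G (g i)) /\ f = \sum_(i < k) h i * g i.

Variable ord : monomial_order n.

Definition is_lead_mnm (f : S) (m : 'X_{1..n}) : Prop :=
  m \in msupp f /\ forall m', m' \in msupp f -> mle ord m' m.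

Definition init_ideal (I : S -> Prop) : S -> Prop :=
  ideal_gen (fun p => exists f m, [/\ I f, f != 0, is_lead_mnm f m & p = 'X_[m]]).

Definition Gnice (J E : S -> Prop) : Prop :=
  ideal_eq (init_ideal (ideal_sum J E)) (ideal_sum (init_ideal J) (init_ideal E)).

End Ideals.

(* Main.v *)
Require Import Defs.
From mathcomp Require Import all_boot all_order all_algebra.
From mathcomp Require Import mpoly.
From Stdlib Require Import Classical ClassicalEpsilon.
From mathcomp Require Import ring.
Set Implicit Arguments. Unset Strict Implicit. Unset Printing Implicit Defensive.

Import GRing.Theory.
Section Dickson.

Lemma exists_min (g : nat -> nat) p :
  exists i, p < i /\ forall j, p < j -> g i <= g j.
Proof.
suff H : forall v i, p < i -> g i <= v ->
  exists i, p < i /\ forall j, p < j -> g i <= g j.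
  by apply: (H (g p.+1) p.+1).
elim=> [|v IH] i Hi Hv.
  exists i; split=> // j _; by rewrite (leq_trans Hv).
case: (classic (exists j, p < j /\ g j < g i)) => [[j [Hj Hlt]]|Hno].
  by apply: (IH j Hj); rewrite -ltnS (leq_trans Hlt).
exists i; split=> // j Hj; rewrite leqNgt; apply/negP => Hlt.
by apply: Hno; exists j.
Qed.

Lemma nat_subseq (g : nat -> nat) :
  exists psi : nat -> nat, (forall i, psi i < psi i.+1) /\
     forall i, g (psi i) <= g (psi i.+1).
Proof.
pose nxt p := proj1_sig (constructive_indefinite_description _ (exists_min g p)).
have nxtP p : p < nxt p /\ forall j, p < j -> g (nxt p) <= g j.
  by rewrite /nxt; case: constructive_indefinite_description.
exists (fun k => iter k.+1 nxt 0); split=> i /=.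
  by case: (nxtP (nxt (iter i nxt 0))).
case: (nxtP (iter i nxt 0)) => H1 H2; apply: H2.
by apply: (ltn_trans H1); case: (nxtP (nxt (iter i nxt 0))).
Qed.

Variable n : nat.
Definition coord (m : 'X_{1..n}) (c : nat) : nat := nth 0%N m c.

Lemma chain_trans (R : nat -> nat -> Prop) :
  (forall a b c, R a b -> R b c -> R a c) -> (forall a, R a a) ->
  forall (h : nat -> nat), (forall i, R (h i) (h i.+1)) ->
  forall i j, i <= j -> R (h i) (h j).
Proof.
move=> Rt Rr h Hh i j Hij; rewrite -(subnKC Hij).
elim: (j - i) => [|k IH]; first by rewrite addn0.
by apply: (Rt _ _ _ IH); rewrite addnS.
Qed.

Lemma dickson_k k (f : nat -> 'X_{1..n}) :
  exists phi : nat -> nat, (forall i, phi i < phi i.+1) /\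
    forall i c, c < k -> coord (f (phi i)) c <= coord (f (phi i.+1)) c.
Proof.
elim: k => [|k [phi [Hphi Hc]]].
  by exists id; split.
have [psi [Hpsi Hg]] := nat_subseq (fun i => coord (f (phi i)) k).
have phiM a b : a <= b -> phi a <= phi b.
  apply: (@chain_trans (fun a b => a <= b)) => //.
  - by move=> x y z; apply: leq_trans.
  - by move=> i; apply: ltnW.
exists (fun i => phi (psi i)); split.
  by move=> i; apply: (leq_trans (Hphi (psi i))); apply: phiM.
move=> i c; rewrite ltnS leq_eqVlt => /orP [/eqP ->|Hck].
  exact: Hg.
apply: (@chain_trans (fun a b => coord (f a) c <= coord (f b) c) _ _ phi) => //.
- by move=> x y z; apply: leq_trans.
- by move=> j; apply: Hc.
- exact: ltnW.
Qed.

Lemma dickson (f : nat -> 'X_{1..n}) :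
  exists i j, i < j /\ (f i <= f j)%MM.
Proof.
have [phi [Hphi Hc]] := dickson_k n f.
exists (phi 0), (phi 1); split=> //; apply/mnm_lepP => i.
rewrite !(mnm_nth 0%N); exact: Hc.
Qed.
End Dickson.

Section Main.
Variables (K : fieldType) (n : nat) (ord : monomial_order n).
Local Notation S := {mpoly K[n]}.
Local Notation mle := (mle ord).
Definition mlt (a b : 'X_{1..n}) := mle a b && (a != b).

Lemma mle_div (a b : 'X_{1..n}) : (a <= b)%MM -> mle a b.
Proof.
move=> H; rewrite -(submK H); have := mle_addr a (mle_0 ord (b - a)%MM).
by rewrite add0m.
Qed.

Lemma mle_anti2 a b : mle a b -> mle b a -> a = b.
Proof. by move=> H1 H2; apply/(@mle_anti _ ord); rewrite H1 H2. Qed.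

Lemma mlt_trans a b c : mlt a b -> mlt b c -> mlt a c.
Proof.
case/andP=> H1 H2 /andP [H3 H4]; rewrite /mlt (mle_trans H1 H3) /=.
apply/negP => /eqP E; subst c.
by move: H2; rewrite (mle_anti2 H1 H3) eqxx.
Qed.

Lemma mlt_wf : well_founded mlt.
Proof.
move=> m0; apply: NNPP => Hna.
have step m : ~ Acc mlt m -> exists m', mlt m' m /\ ~ Acc mlt m'.
  move=> Hm; apply: NNPP => Hno; apply: Hm; constructor => m' Hm'.
  apply: NNPP => Hm''; apply: Hno; by exists m'.
pose T := {m | ~ Acc mlt m}.
have nx (t : T) : {t' : T | mlt (proj1_sig t') (proj1_sig t)}.
  case: t => m Hm /=.
  case: (constructive_indefinite_description _ (step m Hm)) => m' [H1 H2].
  by exists (exist _ m' H2).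
pose f k := proj1_sig (iter k (fun t => proj1_sig (nx t)) (exist _ m0 Hna)).
have Hf k : mlt (f k.+1) (f k).
  by rewrite /f /=; case: (nx _).
have Hlt i j : i < j -> mlt (f j) (f i).
  move=> Hij; rewrite -(subnKC Hij); elim: (j - i.+1) => [|k IH].
    by rewrite addn0.
  by rewrite addnS; apply: mlt_trans (Hf _) IH.
have [i [j [Hij Hd]]] := dickson f.
case/andP: (Hlt i j Hij) => H1 H2.
by move: H2; rewrite (mle_anti2 H1 (mle_div Hd)) eqxx.
Qed.

Local Open Scope ring_scope.
Implicit Types (f g h : S) (m : 'X_{1..n}).
Implicit Types (I J : S -> Prop).

Definition bnd f m := forall m', m' \in msupp f -> mle m' m.
Definition LM (I : S -> Prop) m := exists f, [/\ I f, f != 0 & is_lead_mnm ord f m].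

Lemma lead_seq (s : seq 'X_{1..n}) : s != [::] ->
  exists x, x \in s /\ forall y, y \in s -> mle y x.
Proof.
elim: s => // a s IH _; case: s IH => [|b s] IH.
  exists a; split; first exact: mem_head.
  by move=> y; rewrite mem_seq1 => /eqP ->; apply: mle_refl.
have [x [Hx Hmax]] := IH isT.
case/orP: (mle_total ord a x) => Hax.
  exists x; split; first by rewrite inE Hx orbT.
  by move=> y; rewrite inE => /orP [/eqP ->|/Hmax].
exists a; split; first exact: mem_head.
move=> y; rewrite inE => /orP [/eqP ->|/Hmax Hy]; first exact: mle_refl.
exact: mle_trans Hy Hax.
Qed.

Lemma lead_ex f : f != 0 -> exists m, is_lead_mnm ord f m.
Proof.
rewrite -msupp_eq0 => H; have [x [Hx Hm]] := lead_seq H.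
by exists x; split.
Qed.

Lemma lead_coef f m : is_lead_mnm ord f m -> f@_m != 0.
Proof. by case; rewrite mcoeff_msupp. Qed.

Lemma lead_bnd f m : is_lead_mnm ord f m -> bnd f m.
Proof. by case. Qed.

Lemma lead_of_bnd f m : bnd f m -> f@_m != 0 -> is_lead_mnm ord f m.
Proof. by move=> Hb Hc; split=> //; rewrite mcoeff_msupp. Qed.

Lemma lead_nz f m : is_lead_mnm ord f m -> f != 0.
Proof. by move=> /lead_coef; apply: contraNneq => ->; rewrite mcoeff0. Qed.

Lemma bnd0 m : bnd 0 m.
Proof. by move=> m'; rewrite mcoeff_msupp mcoeff0 eqxx. Qed.

Lemma bndD f g m : bnd f m -> bnd g m -> bnd (f + g) m.
Proof.
by move=> Hf Hg m' /msuppD_le; rewrite mem_cat => /orP [/Hf|/Hg].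
Qed.

Lemma bndB f g m : bnd f m -> bnd g m -> bnd (f - g) m.
Proof.
by move=> Hf Hg m' /msuppB_le; rewrite mem_cat => /orP [/Hf|/Hg].
Qed.

Lemma bndZ c f m : bnd f m -> bnd (c *: f) m.
Proof. by move=> Hf m' /msuppZ_le /Hf. Qed.

Lemma bnd_trans f m m2 : bnd f m -> mle m m2 -> bnd f m2.
Proof. by move=> Hf H m' /Hf H'; apply: mle_trans H' H. Qed.

Lemma bnd_lt f m : bnd f m -> f@_m = 0 -> f != 0 ->
  exists m1, is_lead_mnm ord f m1 /\ mlt m1 m.
Proof.
move=> Hb H0 /lead_ex [m1 Hl]; exists m1; split=> //.
case: (Hl) => Hin _; rewrite /mlt (Hb _ Hin) /=.
by apply/negP => /eqP E; move: Hin; rewrite E mcoeff_msupp H0 eqxx.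
Qed.

Lemma coef_out f m1 m : bnd f m1 -> mlt m1 m -> f@_m = 0.
Proof.
move=> Hb /andP [H1 H2]; apply/eqP; rewrite mcoeff_eq0; apply/negP => /Hb H.
by move: H2; rewrite (mle_anti2 H1 H) eqxx.
Qed.

Lemma coef_lead_cancel f g m : g@_m != 0 ->
  (f - (f@_m / g@_m) *: g)@_m = 0.
Proof. by move=> Hg; rewrite mcoeffB mcoeffZ divfK // subrr. Qed.

Lemma ideal0 I : is_ideal I -> I 0.
Proof. by case. Qed.
Lemma idealD I f g : is_ideal I -> I f -> I g -> I (f + g).
Proof. by case=> _ H _; apply: H. Qed.
Lemma idealM I h f : is_ideal I -> I f -> I (h * f).
Proof. by case=> _ _ H; apply: H. Qed.
Lemma idealZ I c f : is_ideal I -> I f -> I (c *: f).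
Proof. by move=> HI Hf; rewrite -mul_mpolyC; apply: idealM. Qed.
Lemma idealN I f : is_ideal I -> I f -> I (- f).
Proof. by move=> HI Hf; rewrite -scaleN1r; apply: idealZ. Qed.
Lemma idealB I f g : is_ideal I -> I f -> I g -> I (f - g).
Proof. by move=> HI Hf Hg; apply: idealD => //; apply: idealN. Qed.

Lemma sum_ideal I J : is_ideal I -> is_ideal J -> is_ideal (ideal_sum I J).
Proof.
move=> HI HJ; split.
- by exists 0, 0; rewrite addr0; split=> //; apply: ideal0.
- move=> f g [a [b [Ha Hb ->]]] [c [d [Hc Hd ->]]].
  exists (a + c), (b + d); split; try by apply: idealD.
  by rewrite addrACA.
- move=> h f [a [b [Ha Hb ->]]]; exists (h * a), (h * b).
  by split; try apply: idealM; rewrite // mulrDr.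
Qed.

Lemma cap_ideal I J : is_ideal I -> is_ideal J -> is_ideal (ideal_cap I J).
Proof.
move=> HI HJ; split.
- by split; apply: ideal0.
- by move=> f g [? ?] [? ?]; split; apply: idealD.
- by move=> h f [? ?]; split; apply: idealM.
Qed.

Lemma sum_l I J f : is_ideal J -> I f -> ideal_sum I J f.
Proof. by move=> HJ Hf; exists f, 0; rewrite addr0; split=> //; apply: ideal0. Qed.
Lemma sum_r I J f : is_ideal I -> J f -> ideal_sum I J f.
Proof. by move=> HI Hf; exists 0, f; rewrite add0r; split=> //; apply: ideal0. Qed.

Lemma LM_up I m u : is_ideal I -> LM I m -> LM I (u + m)%MM.
Proof.
move=> HI [f [Hf Hnz [Hin Hmax]]].
have Hp := perm_mem (msuppMX f u).
have Hl : is_lead_mnm ord (f * 'X_[u]) (u + m)%MM.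
  split; first by rewrite Hp; apply: map_f.
  move=> y; rewrite Hp => /mapP [m' Hm' ->].
  by rewrite ![(u + _)%MM]addmC; apply: mle_addr; apply: Hmax.
exists (f * 'X_[u]); split=> //; last exact: lead_nz Hl.
by rewrite mulrC; apply: idealM.
Qed.

Lemma LM_div I (g0 m : 'X_{1..n}) : is_ideal I -> LM I g0 -> (g0 <= m)%MM -> LM I m.
Proof. by move=> HI Hg H; rewrite -(submK H); apply: LM_up. Qed.

Lemma gen_seq I (s : seq 'X_{1..n}) (c : 'X_{1..n} -> K) :
  (forall m, m \in s -> LM I m) ->
  init_ideal ord I (\sum_(m <- s) c m *: 'X_[m]).
Proof.
move=> Hs; exists (size s), (fun i => (c (nth 0%MM s i))%:MP),
  (fun i => 'X_[nth 0%MM s i]); split.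
  move=> i; have [f [Hf Hnz Hl]] := Hs _ (mem_nth 0%MM (ltn_ord i)).
  by exists f, (nth 0%MM s i); split.
rewrite (big_nth 0%MM) big_mkord; apply: eq_bigr => i _.
by rewrite mul_mpolyC.
Qed.

Lemma init_char I f : is_ideal I ->
  init_ideal ord I f <-> (forall m, m \in msupp f -> LM I m).
Proof.
move=> HI; split.
  move=> [k [h [g [HG ->]]]].
  apply: (big_ind (fun p : S => forall m, m \in msupp p -> LM I m)).
  - by move=> m; rewrite mcoeff_msupp mcoeff0 eqxx.
  - by move=> x y Hx Hy m /msuppD_le; rewrite mem_cat => /orP [/Hx|/Hy].
  - move=> i _ m; have [f0 [m0 [Hf0 Hnz Hl ->]]] := HG i.
    rewrite (perm_mem (msuppMX _ _)) => /mapP [m' _ ->].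
    by rewrite addmC; apply: LM_up => //; exists f0; split.
move=> H; rewrite {1}(mpolyE f); exact: gen_seq.
Qed.

Definition dec (P : Prop) : bool :=
  if excluded_middle_informative P then true else false.
Lemma decP (P : Prop) : dec P <-> P.
Proof. by rewrite /dec; case: excluded_middle_informative. Qed.

Lemma sum_char I J f : is_ideal I -> is_ideal J ->
  ideal_sum (init_ideal ord I) (init_ideal ord J) f <->
  (forall m, m \in msupp f -> LM I m \/ LM J m).
Proof.
move=> HI HJ; split.
  move=> [g [h [Hg Hh ->]]] m /msuppD_le; rewrite mem_cat => /orP [H|H].
    by left; apply: (init_char g HI).1 H.
  by right; apply: (init_char h HJ).1 H.
move=> H; rewrite {1}(mpolyE f) (bigID (fun m => dec (LM I m))) /=.
eexists; eexists; split; last reflexivity.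
- rewrite -big_filter; apply: gen_seq => m.
  by rewrite mem_filter => /andP [/decP].
- rewrite -big_filter; apply: gen_seq => m.
  rewrite mem_filter => /andP [Hd /H [HL|//]].
  by move: Hd; have := (decP (LM I m)).2 HL => ->.
Qed.

Lemma eq_char (X Y : S -> Prop) (P Q : 'X_{1..n} -> Prop) :
  (forall f, X f <-> forall m, m \in msupp f -> P m) ->
  (forall f, Y f <-> forall m, m \in msupp f -> Q m) ->
  ideal_eq X Y <-> (forall m, P m <-> Q m).
Proof.
move=> HX HY; split=> H.
  move=> m; have Hs := msuppX K m.
  split=> Hm.
    have : Y 'X_[m].
      by apply/(H _).1/(HX _).2 => m'; rewrite Hs mem_seq1 => /eqP ->.
    by move/(HY _).1; apply; rewrite Hs mem_head.
  have : X 'X_[m].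
    by apply/(H _).2/(HY _).2 => m'; rewrite Hs mem_seq1 => /eqP ->.
  by move/(HX _).1; apply; rewrite Hs mem_head.
move=> f; rewrite HX HY; split=> Hf m /Hf; apply H.
Qed.

Lemma LM_of f m I : I f -> is_lead_mnm ord f m -> LM I m.
Proof. by move=> Hf Hl; exists f; split=> //; apply: lead_nz Hl. Qed.

Lemma F4 (A B : S -> Prop) : is_ideal A -> is_ideal B ->
  (forall f, A f -> B f) -> (forall m, LM B m -> LM A m) ->
  forall f, B f -> A f.
Proof.
move=> HA HB HAB HL.
have main : forall m f, B f -> is_lead_mnm ord f m -> A f.
  elim/(well_founded_ind mlt_wf) => m IH f Hf Hl.
  have [g [Hg Hgnz Hgl]] := HL m (LM_of Hf Hl).
  set c := f@_m / g@_m.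
  have Hf' : B (f - c *: g) by apply: idealB => //; apply: idealZ => //; apply: HAB.
  have Hc0 : (f - c *: g)@_m = 0 by apply: coef_lead_cancel; apply: lead_coef.
  have Hb : bnd (f - c *: g) m.
    by apply: bndB; [apply: lead_bnd| apply: bndZ; apply: lead_bnd].
  have -> : f = (f - c *: g) + c *: g by rewrite subrK.
  apply: idealD => //; last by apply: idealZ.
  have [->|Hnz] := eqVneq (f - c *: g) 0; first by apply: ideal0.
  have [m1 [Hl1 Hlt]] := bnd_lt Hb Hc0 Hnz.
  exact: IH Hlt _ Hf' Hl1.
move=> f Hf; have [->|/lead_ex [m Hl]] := eqVneq f 0; first exact: ideal0.
exact: main Hl.
Qed.

Lemma mlt_le a b : mlt a b -> mle a b.
Proof. by case/andP. Qed.

Lemma decomp I J : is_ideal I -> is_ideal J ->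
  (forall m, LM (ideal_sum I J) m -> LM I m \/ LM J m) ->
  forall m f, ideal_sum I J f -> is_lead_mnm ord f m ->
  exists j e, [/\ I j, J e, f = j + e, bnd j m & bnd e m].
Proof.
move=> HI HJ HG; elim/(well_founded_ind mlt_wf) => m IH f Hf Hl.
have HS := sum_ideal HI HJ.
case: (HG m (LM_of Hf Hl)) => [[g [Hg Hgnz Hgl]]|[g [Hg Hgnz Hgl]]].
- set c := f@_m / g@_m; set f' := f - c *: g.
  have Hf' : ideal_sum I J f'.
    by apply: idealB => //; apply: sum_l => //; apply: idealZ.
  have Hc0 : f'@_m = 0 by apply: coef_lead_cancel; apply: lead_coef.
  have Hb : bnd f' m.
    by apply: bndB; [apply: lead_bnd| apply: bndZ; apply: lead_bnd].
  have Ef : f = f' + c *: g by rewrite /f' subrK.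
  have [Ef'|Hnz] := eqVneq f' 0.
    exists (c *: g), 0; split.
    + by apply: idealZ.
    + exact: ideal0.
    + by rewrite addr0 Ef Ef' add0r.
    + by apply: bndZ; apply: lead_bnd.
    + exact: bnd0.
  have [m1 [Hl1 Hlt]] := bnd_lt Hb Hc0 Hnz.
  have [j [e [Hj He Ef2 Hjb Heb]]] := IH m1 Hlt f' Hf' Hl1.
  exists (j + c *: g), e; split.
  + by apply: idealD => //; apply: idealZ.
  + exact: He.
  + by rewrite Ef Ef2 addrAC.
  + apply: bndD; first exact: bnd_trans Hjb (mlt_le Hlt).
    by apply: bndZ; apply: lead_bnd.
  + exact: bnd_trans Heb (mlt_le Hlt).
- set c := f@_m / g@_m; set f' := f - c *: g.
  have Hf' : ideal_sum I J f'.
    by apply: idealB => //; apply: sum_r => //; apply: idealZ.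
  have Hc0 : f'@_m = 0 by apply: coef_lead_cancel; apply: lead_coef.
  have Hb : bnd f' m.
    by apply: bndB; [apply: lead_bnd| apply: bndZ; apply: lead_bnd].
  have Ef : f = f' + c *: g by rewrite /f' subrK.
  have [Ef'|Hnz] := eqVneq f' 0.
    exists 0, (c *: g); split.
    + exact: ideal0.
    + by apply: idealZ.
    + by rewrite add0r Ef Ef' add0r.
    + exact: bnd0.
    + by apply: bndZ; apply: lead_bnd.
  have [m1 [Hl1 Hlt]] := bnd_lt Hb Hc0 Hnz.
  have [j [e [Hj He Ef2 Hjb Heb]]] := IH m1 Hlt f' Hf' Hl1.
  exists j, (e + c *: g); split.
  + exact: Hj.
  + by apply: idealD => //; apply: idealZ.
  + by rewrite Ef Ef2 addrA.
  + exact: bnd_trans Hjb (mlt_le Hlt).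
  + apply: bndD; first exact: bnd_trans Heb (mlt_le Hlt).
    by apply: bndZ; apply: lead_bnd.
Qed.

Lemma cap_of_gnice I J : is_ideal I -> is_ideal J ->
  (forall m, LM (ideal_sum I J) m -> LM I m \/ LM J m) ->
  forall m, LM I m -> LM J m -> LM (ideal_cap I J) m.
Proof.
move=> HI HJ HG m [j [Hj Hjnz Hjl]] [e [He Henz Hel]].
set c := j@_m / e@_m; set d := j - c *: e.
have Hd : ideal_sum I J d.
  by exists j, (- (c *: e)); split=> //; apply: idealN => //; apply: idealZ.
have Hd0 : d@_m = 0 by apply: coef_lead_cancel; apply: lead_coef.
have Hdb : bnd d m.
  by apply: bndB; [apply: lead_bnd| apply: bndZ; apply: lead_bnd].
have [Ed|Hnz] := eqVneq d 0.
  have Ej : j = c *: e by apply/eqP; rewrite -subr_eq0 -/d Ed.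
  exists j; split=> //; split=> //; rewrite Ej; exact: idealZ.
have [m1 [Hl1 Hlt]] := bnd_lt Hdb Hd0 Hnz.
have [j' [e' [Hj' He' Ed Hj'b He'b]]] := decomp HI HJ HG Hd Hl1.
have Hc : (j - j')@_m != 0.
  by rewrite mcoeffB (coef_out Hj'b Hlt) subr0; apply: lead_coef.
have Hjj : j - j' = c *: e + e'.
  have -> : j = d + c *: e by rewrite /d subrK.
  by rewrite Ed; ring.
exists (j - j'); split.
- split; first by apply: idealB.
  by rewrite Hjj; apply: idealD => //; apply: idealZ.
- by apply: contraNneq Hc => ->; rewrite mcoeff0.
- apply: lead_of_bnd => //; apply: bndB; first exact: lead_bnd.
  exact: bnd_trans Hj'b (mlt_le Hlt).
Qed.

Lemma exmax j e : j + e != 0 ->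
  exists M, [/\ bnd j M, bnd e M & (j@_M != 0) || (e@_M != 0)].
Proof.
move=> Hnz; have [Ej|Hj] := eqVneq j 0.
  rewrite Ej add0r in Hnz; have [M Hl] := lead_ex Hnz.
  by exists M; rewrite Ej; split; [exact: bnd0|exact: lead_bnd|rewrite (lead_coef Hl) orbT].
have [Ee|He] := eqVneq e 0.
  have [M Hl] := lead_ex Hj.
  by exists M; rewrite Ee; split; [exact: lead_bnd|exact: bnd0|rewrite (lead_coef Hl)].
have [Mj Hlj] := lead_ex Hj; have [Me Hle] := lead_ex He.
case/orP: (mle_total ord Mj Me) => H.
  exists Me; split; [exact: bnd_trans (lead_bnd Hlj) H|exact: lead_bnd|].
  by rewrite (lead_coef Hle) orbT.
exists Mj; split; [exact: lead_bnd|exact: bnd_trans (lead_bnd Hle) H|].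
by rewrite (lead_coef Hlj).
Qed.

Lemma gnice_of_cap I J : is_ideal I -> is_ideal J ->
  (forall m, LM I m -> LM J m -> LM (ideal_cap I J) m) ->
  forall m, LM (ideal_sum I J) m -> LM I m \/ LM J m.
Proof.
move=> HI HJ HC m0 [f [[j0 [e0 [Hj0 He0 Ef]]] Hfnz [Hfin Hfmax]]].
suff Claim : forall M j e, I j -> J e -> j + e = f -> bnd j M -> bnd e M ->
    (j@_M != 0) || (e@_M != 0) -> LM I m0 \/ LM J m0.
  have Hnz0 : j0 + e0 != 0 by rewrite -Ef.
  have [M [H1 H2 H3]] := exmax Hnz0.
  exact: Claim H3.
elim/(well_founded_ind mlt_wf) => M IH j e Hj He Ef' Hjb Heb Hor.
have [Hab|Hab] := eqVneq (j@_M + e@_M) 0.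
- have Ha : j@_M != 0.
    apply/negP => /eqP Ha; move: Hor Hab; rewrite Ha add0r => /= Hb Hb0.
    by move: Hb; rewrite Hb0 eqxx.
  have Hbe : e@_M = - j@_M by apply/eqP; rewrite -addr_eq0 addrC Hab.
  have Hb : e@_M != 0 by rewrite Hbe oppr_eq0.
  have [h [[Hhj Hhe] Hhnz Hhl]] :=
    HC M (LM_of Hj (lead_of_bnd Hjb Ha)) (LM_of He (lead_of_bnd Heb Hb)).
  set c := j@_M / h@_M.
  have Esum : (j - c *: h) + (e + c *: h) = f by rewrite addrACA addNr addr0.
  have Hj0' : (j - c *: h)@_M = 0 by apply: coef_lead_cancel; apply: lead_coef.
  have He0' : (e + c *: h)@_M = 0.
    by rewrite mcoeffD mcoeffZ divfK ?(lead_coef Hhl) // addrC Hab.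
  have Hjb' : bnd (j - c *: h) M by apply: bndB => //; apply: bndZ; apply: lead_bnd.
  have Heb' : bnd (e + c *: h) M by apply: bndD => //; apply: bndZ; apply: lead_bnd.
  have Hnz1 : (j - c *: h) + (e + c *: h) != 0 by rewrite Esum.
  have [M' [Hb1 Hb2 Hor']] := exmax Hnz1.
  have Hlt : mlt M' M.
    case/orP: Hor' => Hc.
      rewrite /mlt (Hjb' M') ?mcoeff_msupp //=.
      by apply: contraNneq Hc => ->; rewrite Hj0'.
    rewrite /mlt (Heb' M') ?mcoeff_msupp //=.
    by apply: contraNneq Hc => ->; rewrite He0'.
  apply: (IH M' Hlt (j - c *: h) (e + c *: h)) => //.
  + by apply: idealB => //; apply: idealZ.
  + by apply: idealD => //; apply: idealZ.
- have HfM : M \in msupp f by rewrite -Ef' mcoeff_msupp mcoeffD.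
  have E1 := Hfmax _ HfM.
  have E2 : mle m0 M.
    by move: Hfin; rewrite -Ef' => /msuppD_le; rewrite mem_cat => /orP [/Hjb|/Heb].
  have EM := mle_anti2 E1 E2; subst M.
  case/orP: Hor => H; [left; apply: (LM_of Hj)|right; apply: (LM_of He)];
    exact: lead_of_bnd.
Qed.

Lemma LM_mono (X Y : S -> Prop) : (forall f, X f -> Y f) ->
  forall m, LM X m -> LM Y m.
Proof. by move=> H m [f [Hf Hnz Hl]]; exists f; split=> //; apply: H. Qed.

Lemma main_sec J E E' : is_ideal J -> is_ideal E -> is_ideal E' ->
  ((ideal_eq (ideal_sum (ideal_cap J E) (ideal_cap J E')) (ideal_cap J (ideal_sum E E'))
    /\ Gnice ord J (ideal_sum E E'))
   <->
   ideal_eq (init_ideal ord (ideal_sum (ideal_cap J E) (ideal_cap J E')))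
            (ideal_cap (init_ideal ord J) (init_ideal ord (ideal_sum E E')))).
Proof.
move=> HJ HE HE'.
have HE2 := sum_ideal HE HE'.
have HA := sum_ideal (cap_ideal HJ HE) (cap_ideal HJ HE').
have HB := cap_ideal HJ HE2.
set E2 := ideal_sum E E' in HE2 *.
set A := ideal_sum (ideal_cap J E) (ideal_cap J E') in HA *.
set B := ideal_cap J E2 in HB *.
have HAB : forall f, A f -> B f.
  move=> f [g [h [[HgJ HgE] [HhJ HhE] ->]]]; split; first exact: idealD.
  by exists g, h.
have HBJ : forall f, B f -> J f by move=> f [].
have HBE : forall f, B f -> E2 f by move=> f [].
have Hcap_iff : ideal_eq (init_ideal ord A) (ideal_cap (init_ideal ord J) (init_ideal ord E2))
    <-> forall m, LM A m <-> LM J m /\ LM E2 m.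
  apply: eq_char => f; first exact: init_char.
  split.
    by case=> H1 H2 m Hm; split; [apply: (init_char _ HJ).1 H1 m Hm|
                                  apply: (init_char _ HE2).1 H2 m Hm].
  by move=> H; split; apply/init_char => // m /H [].
have Hgn_iff : Gnice ord J E2 <->
    forall m, LM (ideal_sum J E2) m <-> LM J m \/ LM E2 m.
  apply: eq_char => f; first by apply: init_char; apply: sum_ideal.
  exact: sum_char.
split.
- case=> Heq /Hgn_iff Hg; apply/Hcap_iff => m; split.
    move/(LM_mono HAB) => HBm; split; [exact: LM_mono HBJ _ HBm|exact: LM_mono HBE _ HBm].
  case=> H1 H2; have HBm := cap_of_gnice HJ HE2 (fun m => (Hg m).1) H1 H2.
  by apply: LM_mono HBm => f /(Heq f).2.
- move/Hcap_iff => H.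
  have HBA : forall f, B f -> A f.
    apply: F4 => // m HBm; apply/(H m); split.
      exact: LM_mono HBJ _ HBm.
    exact: LM_mono HBE _ HBm.
  split; first by move=> f; split; [apply: HAB|apply: HBA].
  apply/Hgn_iff => m; split.
    apply: gnice_of_cap => // m' H1 H2.
    by apply: LM_mono HAB _ _; apply/(H m').
  case=> Hm; [apply: LM_mono Hm => f; exact: sum_l|apply: LM_mono Hm => f; exact: sum_r].
Qed.
End Main.

Theorem mainTheorem5 (K : fieldType) (n : nat) (ord : monomial_order n)
    (J E E' : {mpoly K[n]} -> Prop) :
  is_ideal J -> is_ideal E -> is_ideal E' ->
  Gnice ord J E -> Gnice ord J E' ->
  ((ideal_eq (ideal_sum (ideal_cap J E) (ideal_cap J E')) (ideal_cap J (ideal_sum E E'))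
    /\ Gnice ord J (ideal_sum E E'))
   <->
   ideal_eq (init_ideal ord (ideal_sum (ideal_cap J E) (ideal_cap J E')))
            (ideal_cap (init_ideal ord J) (init_ideal ord (ideal_sum E E')))).
Proof. by move=> HJ HE HE' _ _; apply: main_sec. Qed.
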